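(* Let $T$ be a $3$-CET with exactly one flip, with domain $S^1\setminus\{a_0,a_1,a_2\}$ where $0=a_0<a_1<a_2<a_3=1$ and $I_i=(a_{i-1},a_i)$, $i=1,2,3$, such that $I_1$ is the flip of $T$ and $T(I_1)<T(I_3)<T(I_2)$ in the cyclic order. Assume $T$ has no periodic points. Let $N\ge2$ be the least positive integer with $T^N(I_1)\cap I_1\neq\emptyset$ (so that $T^n(I_1)$, $0\le n\le N-1$, are pairwise disjoint). Assume that $a_2\in T^{n_0}(I_1)$ for some $1\le n_0\le N-1$, let $d\in I_1$ be such that $T^{n_0}(d)=a_2$, and write $I_1\setminus\{d\}=I_\ell\cup I_r$ with $I_\ell=(a_0,d)$ and $I_r=(d,a_1)$ (so $I_\ell<I_r$ in $S^1\setminus\{a_2\}$). Then either $a_0\in T^N(I_\ell)$ or $a_1\in T^N(I_r)$.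
   Context: $S^1=[0,1]/(0\sim1)$ with orientation induced by $[0,1]$ and points written as points of $[0,1]$. A $3$-CET is an injective map $T:I_1\cup I_2\cup I_3\to S^1$, where $I_1,I_2,I_3$ are pairwise disjoint open subintervals whose closures cover $S^1$, which is an isometry on each $I_i$ and cannot be continuously extended to a larger open set. A flip is an $I_i$ on which $T$ reverses orientation. For a set $J$, $T^n(J)=\{T^n(x): x\in J\cap\mathrm{Dom}(T^n)\}$. For subintervals $J_1,J_2,J_3$ of $S^1$, $J_1<J_2<J_3$ means every triple in $J_1\times J_2\times J_3$ is cyclically ordered; for subintervals of $S^1\setminus\{p\}$, $J_1<J_2$ refers to the linear order on $S^1\setminus\{p\}$ induced by the cyclic order. A periodic point is $p$ with $T^m(p)=p$ for some $m\ge1$. *)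

(* Defs.v *)
From Stdlib Require Import Reals.
Open Scope R_scope.

(* Points of S^1 = [0,1]/(0~1) are represented by reals in [0,1).
   The projection R -> S^1 is frac_part (x - floor x). *)

(* An isometry of an interval into S^1 is x |-> x + c (mod 1)
   (orientation preserving) or x |-> c - x (mod 1) (a flip). *)
Definition piece (flip : bool) (c x : R) : R :=
  if flip then c - x else x + c.

Record CET3 := {
  a1 : R; a2 : R;
  fl1 : bool; fl2 : bool; fl3 : bool;
  c1 : R; c2 : R; c3 : R
}.

Definition I1 (T : CET3) (x : R) : Prop := 0 < x < a1 T.
Definition I2 (T : CET3) (x : R) : Prop := a1 T < x < a2 T.
Definition I3 (T : CET3) (x : R) : Prop := a2 T < x < 1.
Definition Dom (T : CET3) (x : R) : Prop := I1 T x \/ I2 T x \/ I3 T x.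

(* the map itself (only meaningful on Dom T) *)
Definition Tmap (T : CET3) (x : R) : R :=
  if Rlt_dec x (a1 T) then frac_part (piece (fl1 T) (c1 T) x)
  else if Rlt_dec x (a2 T) then frac_part (piece (fl2 T) (c2 T) x)
  else frac_part (piece (fl3 T) (c3 T) x).

(* well-formedness of a 3-CET: partition points, injectivity,
   and non-extendability: at each a_i the two one-sided limits
   (as points of S^1) differ, so T has no continuous extension there. *)
Definition is_CET3 (T : CET3) : Prop :=
  0 < a1 T < a2 T /\ a2 T < 1 /\
  (forall x y, Dom T x -> Dom T y -> Tmap T x = Tmap T y -> x = y) /\
  frac_part (piece (fl3 T) (c3 T) 1) <> frac_part (piece (fl1 T) (c1 T) 0) /\
  frac_part (piece (fl1 T) (c1 T) (a1 T)) <> frac_part (piece (fl2 T) (c2 T) (a1 T)) /\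
  frac_part (piece (fl2 T) (c2 T) (a2 T)) <> frac_part (piece (fl3 T) (c3 T) (a2 T)).

Definition iterT (T : CET3) (n : nat) (x : R) : R := Nat.iter n (Tmap T) x.

Definition DomN (T : CET3) (n : nat) (x : R) : Prop :=
  forall k, (k < n)%nat -> Dom T (iterT T k x).

Definition img (T : CET3) (n : nat) (J : R -> Prop) (y : R) : Prop :=
  exists x, J x /\ DomN T n x /\ iterT T n x = y.

Definition cyc (x y z : R) : Prop :=
  (x < y < z) \/ (y < z < x) \/ (z < x < y).

Definition cyc_sets (J1 J2 J3 : R -> Prop) : Prop :=
  forall x y z, J1 x -> J2 y -> J3 z -> cyc x y z.

Definition has_periodic_point (T : CET3) : Prop :=
  exists p m, (1 <= m)%nat /\ DomN T m p /\ iterT T m p = p.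

Definition meets (J K : R -> Prop) : Prop := exists x, J x /\ K x.

(* Main.v *)
Require Import Defs.
From Stdlib Require Import Reals Lra Lia.
Require Import Defs.
Open Scope R_scope.


Definition eqm (a b : R) : Prop := exists z : Z, a - b = IZR z.

Lemma frac_range r : 0 <= frac_part r < 1.
Proof. destruct (base_fp r); lra. Qed.

Lemma frac_eqm r : eqm (frac_part r) r.
Proof. exists (- Int_part r)%Z. rewrite opp_IZR. unfold frac_part. lra. Qed.

Lemma frac_unique r y : 0 <= y < 1 -> eqm r y -> frac_part r = y.
Proof.
  intros Hy [z Hz].
  destruct (Int_part_frac_part_spec r z y Hy) as [_ H]; [lra|]. auto.
Qed.

Lemma eqm_refl a : eqm a a.
Proof. exists 0%Z. simpl. lra. Qed.
Lemma eqm_sym a b : eqm a b -> eqm b a.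
Proof. intros [z Hz]. exists (- z)%Z. rewrite opp_IZR. lra. Qed.
Lemma eqm_trans a b c : eqm a b -> eqm b c -> eqm a c.
Proof. intros [z Hz] [w Hw]. exists (z + w)%Z. rewrite plus_IZR. lra. Qed.
Lemma eqm_add a b c d : eqm a b -> eqm c d -> eqm (a + c) (b + d).
Proof. intros [z Hz] [w Hw]. exists (z + w)%Z. rewrite plus_IZR. lra. Qed.
Lemma eqm_opp a b : eqm a b -> eqm (- a) (- b).
Proof. intros [z Hz]. exists (- z)%Z. rewrite opp_IZR. lra. Qed.
Lemma eqm_sub a b c d : eqm a b -> eqm c d -> eqm (a - c) (b - d).
Proof. intros H1 H2. unfold Rminus. apply eqm_add; auto. apply eqm_opp; auto. Qed.
Lemma eqm_eq a b : a = b -> eqm a b.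
Proof. intros ->. apply eqm_refl. Qed.
Lemma eqm_one : eqm 1 0.
Proof. exists 1%Z. simpl. lra. Qed.

Lemma frac_eq a b : eqm a b -> frac_part a = frac_part b.
Proof.
  intros H. apply frac_unique. apply frac_range.
  eapply eqm_trans. exact H. apply eqm_sym, frac_eqm.
Qed.

Lemma frac_id y : 0 <= y < 1 -> frac_part y = y.
Proof. intros H. apply frac_unique; auto. apply eqm_refl. Qed.

Lemma frac_frac_add a b : frac_part (frac_part a + b) = frac_part (a + b).
Proof. apply frac_eq. apply eqm_add. apply frac_eqm. apply eqm_refl. Qed.

Lemma IZR_small z : -1 < IZR z < 1 -> z = 0%Z.
Proof.
  intros [H1 H2]. apply lt_IZR in H2. replace (-1) with (IZR (-1)) in H1 by (simpl; lra).
  apply lt_IZR in H1. lia.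
Qed.

Lemma eqm_unit a b : 0 <= a < 1 -> 0 <= b < 1 -> eqm a b -> a = b.
Proof.
  intros Ha Hb [z Hz]. assert (z = 0%Z) by (apply IZR_small; lra). subst. simpl in Hz. lra.
Qed.

Lemma frac_int z : frac_part (IZR z) = 0.
Proof. apply frac_unique. lra. exists z. lra. Qed.

Lemma frac_zero_int r : frac_part r = 0 -> eqm r 0.
Proof. intros H. rewrite <- H. apply eqm_sym, frac_eqm. Qed.

Lemma iterT_S T k x : iterT T (S k) x = Tmap T (iterT T k x).
Proof. reflexivity. Qed.

Lemma iterT_add T a b x : iterT T (a + b) x = iterT T a (iterT T b x).
Proof. unfold iterT. apply Nat.iter_add. Qed.

Lemma DomN_S T k x : DomN T (S k) x <-> DomN T k x /\ Dom T (iterT T k x).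
Proof.
  unfold DomN; split.
  - intros H; split; [intros j Hj; apply H; lia | apply H; lia].
  - intros [H1 H2] j Hj. destruct (Nat.eq_dec j k) as [->|]; auto. apply H1; lia.
Qed.

Lemma DomN_le T k m x : (k <= m)%nat -> DomN T m x -> DomN T k x.
Proof. unfold DomN; intros Hk H j Hj; apply H; lia. Qed.

Lemma DomN_add T a b x : DomN T (a + b) x -> DomN T b x /\ DomN T a (iterT T b x).
Proof.
  unfold DomN; intros H; split.
  - intros j Hj; apply H; lia.
  - intros j Hj. rewrite <- iterT_add. apply H; lia.
Qed.

Lemma DomN_0 T x : DomN T 0 x.
Proof. unfold DomN; intros; lia. Qed.

Lemma Tmap_range T x : 0 <= Tmap T x < 1.
Proof. unfold Tmap. destruct (Rlt_dec _ _); [|destruct (Rlt_dec _ _)]; apply frac_range. Qed.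

Lemma iterT_range T k x : (1 <= k)%nat -> 0 <= iterT T k x < 1.
Proof. intros Hk. destruct k; [lia|]. rewrite iterT_S. apply Tmap_range. Qed.

Lemma Tmap_I1 T x : fl1 T = true -> I1 T x -> Tmap T x = frac_part (c1 T - x).
Proof.
  intros Hf [H1 H2]. unfold Tmap. destruct (Rlt_dec x (a1 T)); [|lra].
  rewrite Hf. reflexivity.
Qed.

Lemma Tmap_I2 T x : fl2 T = false -> I2 T x -> Tmap T x = frac_part (x + c2 T).
Proof.
  intros Hf [H1 H2]. unfold Tmap. destruct (Rlt_dec x (a1 T)); [lra|].
  destruct (Rlt_dec x (a2 T)); [|lra]. rewrite Hf. reflexivity.
Qed.

Lemma Tmap_I3 T x : a1 T < a2 T -> fl3 T = false -> I3 T x -> Tmap T x = frac_part (x + c3 T).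
Proof.
  intros Ha Hf [H1 H2]. unfold Tmap. destruct (Rlt_dec x (a1 T)); [lra|].
  destruct (Rlt_dec x (a2 T)); [lra|]. rewrite Hf. reflexivity.
Qed.

Lemma iter_inj T k x y : is_CET3 T -> DomN T k x -> DomN T k y ->
  iterT T k x = iterT T k y -> x = y.
Proof.
  intros HT. revert x y. induction k as [|k IH]; intros x y Hx Hy E.
  - exact E.
  - apply DomN_S in Hx as [Hx Hx']. apply DomN_S in Hy as [Hy Hy'].
    rewrite !iterT_S in E. destruct HT as (_ & _ & Hinj & _).
    apply IH; auto.
Qed.

Definition wf3 T := 0 < a1 T < a2 T /\ a2 T < 1 /\ fl1 T = true /\ fl2 T = false /\ fl3 T = false.

Lemma Dom_range T y : wf3 T -> Dom T y -> 0 < y < 1.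
Proof. intros (H1&H2&_) [H|[H|H]]; unfold I1, I2, I3 in H; lra. Qed.

Lemma local_aff T k x : wf3 T -> 0 < x < 1 -> DomN T k x ->
  exists del, 0 < del /\ exists o, (o = 1 \/ o = -1) /\
   forall h, - del < h < del -> DomN T k (x + h) /\
      iterT T k (x + h) = frac_part (iterT T k x + o * h).
Proof.
  intros W Hx. induction k as [|k IH]; intros HD.
  - exists (Rmin x (1 - x)). split. apply Rmin_glb_lt; lra.
    exists 1. split; auto. intros h Hh. split. apply DomN_0.
    simpl. rewrite frac_id. lra.
    pose proof (Rmin_l x (1-x)); pose proof (Rmin_r x (1-x)). lra.
  - apply DomN_S in HD as [HD Hy].
    destruct (IH HD) as (del & Hdel & o & Ho & Hloc).
    set (y := iterT T k x) in *.
    destruct W as (Wa & Wb & F1 & F2 & F3).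
    destruct Hy as [Hy|[Hy|Hy]]; unfold I1, I2, I3 in Hy.
    + set (e := Rmin del (Rmin y (a1 T - y))).
      assert (He : 0 < e) by (unfold e; repeat apply Rmin_glb_lt; lra).
      assert (e <= del /\ e <= y /\ e <= a1 T - y) as (E1&E2&E3).
      { unfold e. pose proof (Rmin_l del (Rmin y (a1 T - y))). pose proof (Rmin_r del (Rmin y (a1 T - y))).
        pose proof (Rmin_l y (a1 T - y)). pose proof (Rmin_r y (a1 T - y)). lra. }
      exists e. split; auto. exists (- o). split. destruct Ho; subst; lra.
      intros h Hh.
      destruct (Hloc h) as [D1 D2]. lra.
      assert (Hfy : frac_part (y + o * h) = y + o * h) by (apply frac_id; destruct Ho; subst; lra).
      assert (HI : I1 T (y + o * h)) by (unfold I1; destruct Ho; subst; lra).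
      split.
      * apply DomN_S. split; auto. fold y. rewrite D2, Hfy. left; auto.
      * rewrite !iterT_S. fold y. rewrite D2, Hfy.
        rewrite (Tmap_I1 T y F1) by (unfold I1; lra). rewrite (Tmap_I1 T _ F1 HI).
        rewrite frac_frac_add. f_equal. ring.
    + set (e := Rmin del (Rmin (y - a1 T) (a2 T - y))).
      assert (He : 0 < e) by (unfold e; repeat apply Rmin_glb_lt; lra).
      assert (e <= del /\ e <= y - a1 T /\ e <= a2 T - y) as (E1&E2&E3).
      { unfold e. pose proof (Rmin_l del (Rmin (y - a1 T) (a2 T - y))). pose proof (Rmin_r del (Rmin (y - a1 T) (a2 T - y))).
        pose proof (Rmin_l (y - a1 T) (a2 T - y)). pose proof (Rmin_r (y - a1 T) (a2 T - y)). lra. }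
      exists e. split; auto. exists o. split; auto.
      intros h Hh.
      destruct (Hloc h) as [D1 D2]. lra.
      assert (Hfy : frac_part (y + o * h) = y + o * h) by (apply frac_id; destruct Ho; subst; lra).
      assert (HI : I2 T (y + o * h)) by (unfold I2; destruct Ho; subst; lra).
      split.
      * apply DomN_S. split; auto. fold y. rewrite D2, Hfy. right; left; auto.
      * rewrite !iterT_S. fold y. rewrite D2, Hfy.
        rewrite (Tmap_I2 T y F2) by (unfold I2; lra). rewrite (Tmap_I2 T _ F2 HI).
        rewrite frac_frac_add. f_equal. ring.
    + set (e := Rmin del (Rmin (y - a2 T) (1 - y))).
      assert (He : 0 < e) by (unfold e; repeat apply Rmin_glb_lt; lra).
      assert (e <= del /\ e <= y - a2 T /\ e <= 1 - y) as (E1&E2&E3).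
      { unfold e. pose proof (Rmin_l del (Rmin (y - a2 T) (1 - y))). pose proof (Rmin_r del (Rmin (y - a2 T) (1 - y))).
        pose proof (Rmin_l (y - a2 T) (1 - y)). pose proof (Rmin_r (y - a2 T) (1 - y)). lra. }
      exists e. split; auto. exists o. split; auto.
      intros h Hh.
      destruct (Hloc h) as [D1 D2]. lra.
      assert (Hfy : frac_part (y + o * h) = y + o * h) by (apply frac_id; destruct Ho; subst; lra).
      assert (HI : I3 T (y + o * h)) by (unfold I3; destruct Ho; subst; lra).
      split.
      * apply DomN_S. split; auto. fold y. rewrite D2, Hfy. right; right; auto.
      * rewrite !iterT_S. fold y. rewrite D2, Hfy.
        rewrite (Tmap_I3 T y (proj2 Wa) F3) by (unfold I3; lra). rewrite (Tmap_I3 T _ (proj2 Wa) F3 HI).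
        rewrite frac_frac_add. f_equal. ring.
Qed.

Record Setting (T : CET3) (N n0 : nat) (d : R) : Prop := {
  S_cet : is_CET3 T;
  S_fl1 : fl1 T = true; S_fl2 : fl2 T = false; S_fl3 : fl3 T = false;
  S_cyc : cyc_sets (img T 1 (I1 T)) (img T 1 (I3 T)) (img T 1 (I2 T));
  S_noper : ~ has_periodic_point T;
  S_N2 : (2 <= N)%nat;
  S_meet : meets (img T N (I1 T)) (I1 T);
  S_min : forall n, (1 <= n)%nat -> (n < N)%nat -> ~ meets (img T n (I1 T)) (I1 T);
  S_n01 : (1 <= n0)%nat; S_n0N : (n0 <= N - 1)%nat;
  S_d : I1 T d; S_dD : DomN T n0 d; S_dv : iterT T n0 d = a2 T }.

Lemma S_wf T N n0 d : Setting T N n0 d -> wf3 T.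
Proof. intros S. destruct (S_cet _ _ _ _ S) as (H1&H2&_). pose proof (S_fl1 _ _ _ _ S).
  pose proof (S_fl2 _ _ _ _ S). pose proof (S_fl3 _ _ _ _ S). unfold wf3; tauto. Qed.

Lemma nomeet T N n0 d k x : Setting T N n0 d -> (1 <= k)%nat -> (k < N)%nat ->
  I1 T x -> DomN T k x -> ~ I1 T (iterT T k x).
Proof.
  intros S Hk HkN Hx HD HI. apply (S_min _ _ _ _ S k Hk HkN).
  exists (iterT T k x). split; auto. exists x; auto.
Qed.

Lemma collide T N n0 d k k' x x' : Setting T N n0 d -> (k < N)%nat -> (k' < N)%nat ->
  I1 T x -> I1 T x' -> DomN T k x -> DomN T k' x' -> iterT T k x = iterT T k' x' ->
  k = k' /\ x = x'.
Proof.
  intros S Hk Hk' Hx Hx' D D' E.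
  destruct (Nat.lt_total k k') as [Hlt|[Heq|Hgt]].
  - exfalso. replace k' with (k + (k' - k))%nat in D', E by lia.
    rewrite iterT_add in E. apply DomN_add in D' as [D1 D2].
    apply (iter_inj T k) in E; auto using (S_cet _ _ _ _ S).
    apply (nomeet T N n0 d (k' - k) x' S); try lia; auto. rewrite <- E; auto.
  - subst. split; auto. eapply iter_inj; eauto. apply (S_cet _ _ _ _ S).
  - exfalso. replace k with (k' + (k - k'))%nat in D, E by lia.
    rewrite iterT_add in E. apply DomN_add in D as [D1 D2].
    apply (iter_inj T k') in E; auto using (S_cet _ _ _ _ S).
    apply (nomeet T N n0 d (k - k') x S); try lia; auto. rewrite E; auto.
Qed.

Lemma not_dom_cases T y : wf3 T -> 0 <= y < 1 -> ~ Dom T y -> y = 0 \/ y = a1 T \/ y = a2 T.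
Proof.
  intros (Wa&Wb&_) Hy HD. unfold Dom, I1, I2, I3 in HD.
  destruct (Req_dec y 0); auto. destruct (Req_dec y (a1 T)); auto. destruct (Req_dec y (a2 T)); auto.
  exfalso. apply HD. lra.
Qed.

Lemma dom_step T N n0 d k x : Setting T N n0 d -> (1 <= k)%nat -> (k < N)%nat ->
  I1 T x -> DomN T k x -> ~ (k = n0 /\ x = d) -> Dom T (iterT T k x).
Proof.
  intros S Hk HkN Hx HD Hne.
  pose proof (S_wf _ _ _ _ S) as W.
  pose proof W as (Wa&Wb&_).
  destruct (Classical_Prop.classic (Dom T (iterT T k x))) as [|HnD]; auto. exfalso.
  assert (Hx1 : 0 < x < 1) by (unfold I1 in Hx; lra).
  destruct (local_aff T k x W Hx1 HD) as (del & Hdel & o & Ho & Hloc).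
  unfold I1 in Hx.
  set (e := Rmin del (Rmin (Rmin x (a1 T - x)) (a1 T))).
  assert (He : 0 < e) by (unfold e; repeat apply Rmin_glb_lt; lra).
  assert (e <= del /\ e <= x /\ e <= a1 T - x /\ e <= a1 T) as (E1&E2&E3&E4).
  { unfold e. pose proof (Rmin_l del (Rmin (Rmin x (a1 T - x)) (a1 T))).
    pose proof (Rmin_r del (Rmin (Rmin x (a1 T - x)) (a1 T))).
    pose proof (Rmin_l (Rmin x (a1 T - x)) (a1 T)). pose proof (Rmin_r (Rmin x (a1 T - x)) (a1 T)).
    pose proof (Rmin_l x (a1 T - x)). pose proof (Rmin_r x (a1 T - x)). lra. }
  destruct (not_dom_cases T _ W (iterT_range T k x Hk) HnD) as [Hy|[Hy|Hy]].
  - destruct (Hloc (o * (e/2))) as [D1 D2]. destruct Ho; subst; lra.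
    apply (nomeet T N n0 d k (x + o * (e/2)) S Hk HkN); auto.
    unfold I1; destruct Ho; subst; lra.
    rewrite D2, Hy. rewrite frac_id; unfold I1; destruct Ho; subst; lra.
  - destruct (Hloc (- o * (e/2))) as [D1 D2]. destruct Ho; subst; lra.
    apply (nomeet T N n0 d k (x + - o * (e/2)) S Hk HkN); auto.
    unfold I1; destruct Ho; subst; lra.
    rewrite D2, Hy. rewrite frac_id; unfold I1; destruct Ho; subst; lra.
  - destruct (Nat.eq_dec k n0) as [Ek|Nk].
    + subst k. apply Hne. split; auto.
      eapply iter_inj. apply (S_cet _ _ _ _ S). exact HD. apply (S_dD _ _ _ _ S).
      rewrite Hy, (S_dv _ _ _ _ S). reflexivity.
    + pose proof (S_d _ _ _ _ S) as Hd. unfold I1 in Hd.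
      assert (Hd1 : 0 < d < 1) by lra.
      destruct (local_aff T n0 d W Hd1 (S_dD _ _ _ _ S)) as (del' & Hdel' & o' & Ho' & Hloc').
      set (e' := Rmin e (Rmin del' (Rmin (Rmin d (a1 T - d)) (1 - a2 T)))).
      assert (He' : 0 < e') by (unfold e'; repeat apply Rmin_glb_lt; lra).
      assert (e' <= e /\ e' <= del' /\ e' <= d /\ e' <= a1 T - d /\ e' <= 1 - a2 T) as (F1&F2&F3&F4&F5).
      { unfold e'. pose proof (Rmin_l e (Rmin del' (Rmin (Rmin d (a1 T - d)) (1 - a2 T)))).
        pose proof (Rmin_r e (Rmin del' (Rmin (Rmin d (a1 T - d)) (1 - a2 T)))).
        pose proof (Rmin_l del' (Rmin (Rmin d (a1 T - d)) (1 - a2 T))).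
        pose proof (Rmin_r del' (Rmin (Rmin d (a1 T - d)) (1 - a2 T))).
        pose proof (Rmin_l (Rmin d (a1 T - d)) (1 - a2 T)). pose proof (Rmin_r (Rmin d (a1 T - d)) (1 - a2 T)).
        pose proof (Rmin_l d (a1 T - d)). pose proof (Rmin_r d (a1 T - d)). lra. }
      destruct (Hloc (o * (e'/2))) as [D1 D2]. destruct Ho; subst; lra.
      destruct (Hloc' (o' * (e'/2))) as [D1' D2']. destruct Ho'; subst; lra.
      assert (n0 < N)%nat by (pose proof (S_n0N _ _ _ _ S); lia).
      destruct (collide T N n0 d k n0 (x + o * (e'/2)) (d + o' * (e'/2)) S) as [Hc _]; auto.
      unfold I1; destruct Ho; subst; lra. unfold I1; destruct Ho'; subst; lra.
      rewrite D2, D2', Hy, (S_dv _ _ _ _ S). f_equal. destruct Ho, Ho'; subst; lra.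
Qed.

Lemma dom_all T N n0 d k x : Setting T N n0 d -> (k <= N)%nat -> I1 T x ->
  ((n0 < k)%nat -> x <> d) -> DomN T k x.
Proof.
  intros S. induction k as [|k IH]; intros Hk Hx Hne.
  - apply DomN_0.
  - apply DomN_S. assert (DomN T k x) by (apply IH; auto; lia). split; auto.
    destruct k. simpl. left; auto.
    apply (dom_step T N n0 d); auto; try lia.
    intros [E1 E2]. apply Hne; auto. lia.
Qed.

Lemma nowrap e u v : (forall t, u < t < v -> frac_part (e - t) <> 0) ->
  forall t1 t2, u < t1 < v -> u < t2 < v -> frac_part (e - t1) - frac_part (e - t2) = t2 - t1.
Proof.
  intros H.
  assert (K : forall t1 t2, u < t1 < v -> u < t2 < v -> (Int_part (e - t1) < Int_part (e - t2))%Z -> False).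
  { intros t1 t2 H1 H2 Hlt.
    pose proof (base_Int_part (e - t1)) as [B1 B1']. pose proof (base_Int_part (e - t2)) as [B2 B2'].
    assert (Hz : (Int_part (e - t1) + 1 <= Int_part (e - t2))%Z) by lia.
    apply IZR_le in Hz. rewrite plus_IZR in Hz.
    apply (H (e - IZR (Int_part (e - t1) + 1))).
    rewrite plus_IZR. split; lra.
    replace (e - (e - IZR (Int_part (e - t1) + 1))) with (IZR (Int_part (e - t1) + 1)) by ring.
    apply frac_int. }
  intros t1 t2 H1 H2.
  assert (Int_part (e - t1) = Int_part (e - t2)).
  { destruct (Z.lt_total (Int_part (e - t1)) (Int_part (e - t2))) as [L|[L|L]]; auto.
    exfalso; exact (K t1 t2 H1 H2 L). exfalso; exact (K t2 t1 H2 H1 L). }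
  unfold frac_part. rewrite H0. ring.
Qed.

Lemma same_piece T e u v : wf3 T -> u < v ->
  (forall t, u < t < v -> Dom T (frac_part (e - t)) /\ ~ I1 T (frac_part (e - t))) ->
  exists c', forall t, u < t < v -> Tmap T (frac_part (e - t)) = frac_part (c' - t).
Proof.
  intros W Huv H. pose proof W as (Wa&Wb&F1&F2&F3).
  assert (NZ : forall t, u < t < v -> frac_part (e - t) <> 0).
  { intros t Ht E. destruct (H t Ht) as [HD _]. apply Dom_range in HD; auto. lra. }
  pose proof (nowrap e u v NZ) as NW.
  set (t0 := (u + v) / 2). assert (Ht0 : u < t0 < v) by (unfold t0; lra).
  assert (NA2 : forall t, u < t < v -> frac_part (e - t) <> a2 T).
  { intros t Ht E. destruct (H t Ht) as [HD _]. rewrite E in HD.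
    destruct HD as [X|[X|X]]; unfold I1, I2, I3 in X; lra. }
  destruct (H t0 Ht0) as [HD0 HN0].
  destruct HD0 as [X|[X|X]]; [contradiction| |].
  - exists (e + c2 T). intros t Ht.
    assert (I2 T (frac_part (e - t))).
    { destruct (H t Ht) as [HD HN]. destruct HD as [Y|[Y|Y]]; [contradiction|auto|].
      exfalso. unfold I2, I3 in X, Y.
      pose proof (NW t t0 Ht Ht0).
      set (ts := t0 + frac_part (e - t0) - a2 T).
      assert (u < ts < v) by (unfold ts; lra).
      apply (NA2 ts H1). pose proof (NW ts t0 H1 Ht0). unfold ts in *. lra. }
    rewrite (Tmap_I2 T _ F2 H0). apply frac_eq.
    eapply eqm_trans. apply eqm_add. apply frac_eqm. apply eqm_refl.
    apply eqm_eq. ring.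
  - exists (e + c3 T). intros t Ht.
    assert (I3 T (frac_part (e - t))).
    { destruct (H t Ht) as [HD HN]. destruct HD as [Y|[Y|Y]]; [contradiction| |auto].
      exfalso. unfold I2, I3 in X, Y.
      pose proof (NW t t0 Ht Ht0).
      set (ts := t0 + frac_part (e - t0) - a2 T).
      assert (u < ts < v) by (unfold ts; lra).
      apply (NA2 ts H1). pose proof (NW ts t0 H1 Ht0). unfold ts in *. lra. }
    rewrite (Tmap_I3 T _ (proj2 Wa) F3 H0). apply frac_eq.
    eapply eqm_trans. apply eqm_add. apply frac_eqm. apply eqm_refl.
    apply eqm_eq. ring.
Qed.

Lemma Rmin_both a b : Rmin a b <= a /\ Rmin a b <= b.
Proof. split; [apply Rmin_l|apply Rmin_r]. Qed.

Lemma pure (a L2 L3 u w : R) : 0 < a -> 0 < L2 -> 0 < L3 -> a + L2 + L3 = 1 ->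
  0 <= u < 1 -> 0 <= w < 1 ->
  (forall t t', 0 < t < L3 -> 0 < t' < a -> frac_part (u + t) <> 1 - t') ->
  (forall s t', 0 < s < L2 -> 0 < t' < a -> frac_part (w + s) <> 1 - t') ->
  (forall t' t s, 0 < t' < a -> 0 < t < L3 -> 0 < s < L2 ->
      cyc (1 - t') (frac_part (u + t)) (frac_part (w + s))) ->
  u = 0 /\ w = L3.
Proof.
  intros Ha H2 H3 Hsum Hu Hw C3 C2 Cy.
  assert (B : forall x L, 0 <= x < 1 -> 0 < L -> 
     (forall t t', 0 < t < L -> 0 < t' < a -> frac_part (x + t) <> 1 - t') ->
     x + L <= 1 - a).
  { intros x L Hx HL C.
    assert (x <= 1 - a).
    { destruct (Rle_dec x (1 - a)) as [|Hn]; auto. exfalso.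
      set (t := Rmin L (1 - x) / 2). pose proof (Rmin_both L (1 - x)).
      assert (0 < Rmin L (1 - x)) by (apply Rmin_glb_lt; lra).
      apply (C t (1 - x - t)). unfold t; lra. unfold t; lra.
      rewrite frac_id; unfold t; lra. }
    destruct (Rle_dec (x + L) (1 - a)) as [|Hn]; auto. exfalso.
    set (t := ((1 - a - x) + Rmin L (1 - x)) / 2). pose proof (Rmin_both L (1 - x)).
    assert (1 - a - x < Rmin L (1 - x)) by (apply Rmin_glb_lt; lra).
    apply (C t (1 - x - t)). unfold t; lra. unfold t; lra.
    rewrite frac_id; unfold t; lra. }
  pose proof (B u L3 Hu H3 C3) as Bu. pose proof (B w L2 Hw H2 C2) as Bw.
  assert (O : forall t s, 0 < t < L3 -> 0 < s < L2 -> u + t < w + s).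
  { intros t s Ht Hs. pose proof (Cy (a/2) t s ltac:(lra) Ht Hs) as Hc.
    rewrite !frac_id in Hc by lra. unfold cyc in Hc. lra. }
  assert (u + L3 <= w).
  { destruct (Rle_dec (u + L3) w) as [|Hn]; auto. exfalso.
    set (eta := Rmin (Rmin L3 L2) (u + L3 - w) / 3).
    pose proof (Rmin_both (Rmin L3 L2) (u + L3 - w)). pose proof (Rmin_both L3 L2).
    assert (0 < Rmin (Rmin L3 L2) (u + L3 - w)) by (repeat apply Rmin_glb_lt; lra).
    pose proof (O (L3 - eta) eta ltac:(unfold eta; lra) ltac:(unfold eta; lra)).
    unfold eta in *; lra. }
  lra.
Qed.

Lemma rot_val y e : 0 <= y < 1 -> 0 <= e < 1 ->
  frac_part (y - e) = if Rle_dec e y then y - e else y - e + 1.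
Proof.
  intros Hy He. destruct (Rle_dec e y).
  - apply frac_id; lra.
  - apply frac_unique. lra. exists (-1)%Z. simpl. lra.
Qed.

Lemma rot_cyc x y z e : 0 <= x < 1 -> 0 <= y < 1 -> 0 <= z < 1 -> 0 <= e < 1 ->
  cyc x y z -> cyc (frac_part (x - e)) (frac_part (y - e)) (frac_part (z - e)).
Proof.
  intros Hx Hy Hz He Hc.
  rewrite (rot_val x e), (rot_val y e), (rot_val z e); auto.
  unfold cyc in *.
  destruct (Rle_dec e x); destruct (Rle_dec e y); destruct (Rle_dec e z);
  (destruct Hc as [Hc|[Hc|Hc]];
   first [left; lra | right; left; lra | right; right; lra | exfalso; lra]).
Qed.

Lemma glue T : is_CET3 T -> fl1 T = true -> fl2 T = false -> fl3 T = false ->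
  cyc_sets (img T 1 (I1 T)) (img T 1 (I3 T)) (img T 1 (I2 T)) ->
  eqm (a2 T + c3 T) (c1 T) /\ eqm (a2 T + c2 T) (c1 T - a1 T).
Proof.
  intros HT F1 F2 F3 Hcyc. pose proof HT as (Wa & Wb & Hinj & _).
  set (e := frac_part (c1 T)).
  assert (He : 0 <= e < 1) by apply frac_range.
  assert (Hec : eqm e (c1 T)) by apply frac_eqm.
  set (u := frac_part (a2 T + c3 T - e)). set (w := frac_part (a1 T + c2 T - e)).
  set (rho := fun y => frac_part (y - e)).
  assert (R1 : forall t, 0 < t < a1 T -> rho (Tmap T t) = 1 - t).
  { intros t Ht. unfold rho. rewrite (Tmap_I1 T t F1) by (unfold I1; lra).
    apply frac_unique. lra.
    destruct (frac_eqm (c1 T - t)) as [z1 Hz1]. destruct Hec as [z2 Hz2].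
    exists (z1 - z2 - 1)%Z. rewrite !minus_IZR. simpl (IZR 1). lra. }
  assert (R3 : forall t, 0 < t < 1 - a2 T -> rho (Tmap T (a2 T + t)) = frac_part (u + t)).
  { intros t Ht. unfold rho, u. rewrite (Tmap_I3 T _ (proj2 Wa) F3) by (unfold I3; lra).
    apply frac_eq.
    destruct (frac_eqm (a2 T + t + c3 T)) as [z1 Hz1].
    destruct (frac_eqm (a2 T + c3 T - e)) as [z2 Hz2].
    exists (z1 - z2)%Z. rewrite minus_IZR. lra. }
  assert (R2 : forall t, 0 < t < a2 T - a1 T -> rho (Tmap T (a1 T + t)) = frac_part (w + t)).
  { intros t Ht. unfold rho, w. rewrite (Tmap_I2 T _ F2) by (unfold I2; lra).
    apply frac_eq.
    destruct (frac_eqm (a1 T + t + c2 T)) as [z1 Hz1].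
    destruct (frac_eqm (a1 T + c2 T - e)) as [z2 Hz2].
    exists (z1 - z2)%Z. rewrite minus_IZR. lra. }
  assert (Rinj : forall y y', 0 <= y < 1 -> 0 <= y' < 1 -> rho y = rho y' -> y = y').
  { intros y y' Hy Hy' E. unfold rho in E. apply eqm_unit; auto.
    destruct (frac_eqm (y - e)) as [z1 Hz1]. destruct (frac_eqm (y' - e)) as [z2 Hz2].
    exists (z2 - z1)%Z. rewrite minus_IZR. lra. }
  assert (Dm1 : forall t, 0 < t < a1 T -> Dom T t) by (intros; left; unfold I1; lra).
  assert (Dm3 : forall t, 0 < t < 1 - a2 T -> Dom T (a2 T + t)) by (intros; right; right; unfold I3; lra).
  assert (Dm2 : forall t, 0 < t < a2 T - a1 T -> Dom T (a1 T + t)) by (intros; right; left; unfold I2; lra).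
  assert (DN : forall x, Dom T x -> DomN T 1 x).
  { intros x Hx j Hj. assert (j = 0%nat) by lia. subst. exact Hx. }
  destruct (pure (a1 T) (a2 T - a1 T) (1 - a2 T) u w) as [Hu Hw]; try lra.
  apply frac_range. apply frac_range.
  - intros t t' Ht Ht' E. rewrite <- (R3 t Ht), <- (R1 t' Ht') in E.
    apply Rinj in E; try apply Tmap_range. apply Hinj in E; auto. lra.
  - intros t t' Ht Ht' E. rewrite <- (R2 t Ht), <- (R1 t' Ht') in E.
    apply Rinj in E; try apply Tmap_range. apply Hinj in E; auto. lra.
  - intros t' t s Ht' Ht Hs. rewrite <- (R3 t Ht), <- (R1 t' Ht'), <- (R2 s Hs).
    unfold rho. apply rot_cyc; try apply Tmap_range; auto.
    apply Hcyc; [exists t'|exists (a2 T + t)|exists (a1 T + s)]; repeat split; auto;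
      unfold I1, I2, I3; lra.
  - split.
    + apply frac_zero_int in Hu. destruct Hu as [z1 Hz1]. destruct Hec as [z2 Hz2].
      exists (z1 + z2)%Z. rewrite plus_IZR. lra.
    + assert (eqm (a1 T + c2 T - e) (1 - a2 T)).
      { rewrite <- Hw. apply eqm_sym, frac_eqm. }
      destruct H as [z1 Hz1]. destruct Hec as [z2 Hz2].
      exists (z1 + z2 + 1)%Z. rewrite !plus_IZR. simpl (IZR 1). lra.
Qed.

Lemma frac_shift c x : frac_part (c - x) = frac_part (frac_part c - x).
Proof. apply frac_eq. apply eqm_sub. apply eqm_sym, frac_eqm. apply eqm_refl. Qed.

Lemma early T N n0 d : Setting T N n0 d -> forall k, (1 <= k)%nat -> (k <= n0)%nat ->
  exists c, forall x, I1 T x -> iterT T k x = frac_part (c - x).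
Proof.
  intros HS. pose proof (S_wf _ _ _ _ HS) as W. pose proof W as (Wa&Wb&F1&F2&F3).
  pose proof (S_n0N _ _ _ _ HS). pose proof (S_N2 _ _ _ _ HS).
  induction k as [|k IH]; intros Hk Hkn. lia.
  destruct k.
  - exists (c1 T). intros x Hx. simpl. apply Tmap_I1; auto.
  - destruct IH as [c Hc]; try lia.
    destruct (same_piece T c 0 (a1 T) W ltac:(lra)) as [c' Hc'].
    { intros t Ht. rewrite <- Hc by (unfold I1; lra). split.
      - assert (HD : DomN T (S (S k)) t) by (apply (dom_all T N n0 d); [exact HS|lia|unfold I1; lra|intros; lia]).
        apply DomN_S in HD. tauto.
      - apply (nomeet T N n0 d); [exact HS|lia|lia|unfold I1; lra|].
        apply (dom_all T N n0 d); [exact HS|lia|unfold I1; lra|intros; lia]. }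
    exists c'. intros x Hx. rewrite iterT_S, Hc by auto. apply Hc'. unfold I1 in Hx; lra.
Qed.

Lemma at_n0 T N n0 d : Setting T N n0 d -> forall x, I1 T x -> iterT T n0 x = a2 T + d - x.
Proof.
  intros HS. pose proof (S_wf _ _ _ _ HS) as W. pose proof W as (Wa&Wb&F1&F2&F3).
  pose proof (S_n0N _ _ _ _ HS). pose proof (S_N2 _ _ _ _ HS). pose proof (S_n01 _ _ _ _ HS).
  pose proof (S_d _ _ _ _ HS) as Hd. pose proof (S_dv _ _ _ _ HS) as Hdv.
  destruct (early T N n0 d HS n0) as [c Hc]; try lia.
  assert (NZ : forall t, 0 < t < a1 T -> frac_part (c - t) <> 0).
  { intros t Ht E. rewrite <- Hc in E by (unfold I1; lra).
    destruct (Req_dec t d) as [->|Hne].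
    - rewrite Hdv in E. lra.
    - assert (HD : DomN T (S n0) t) by (apply (dom_all T N n0 d); [exact HS|lia|unfold I1; lra|intros; auto]).
      apply DomN_S in HD as [_ HD]. rewrite E in HD. apply Dom_range in HD; auto. lra. }
  intros x Hx. pose proof (nowrap c 0 (a1 T) NZ x d ltac:(unfold I1 in Hx; lra) ltac:(unfold I1 in Hd; lra)).
  rewrite Hc by auto. rewrite (Hc d Hd) in Hdv. lra.
Qed.

Lemma left_adj T N n0 d : Setting T N n0 d -> forall j, (1 <= j)%nat -> (j <= N - n0)%nat ->
  exists c, forall x, 0 < x < d -> iterT T j x = frac_part (c - x) /\
                                   iterT T (n0 + j) x = frac_part (c + d - x).
Proof.
  intros HS. pose proof (S_wf _ _ _ _ HS) as W. pose proof W as (Wa&Wb&F1&F2&F3).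
  pose proof (S_n0N _ _ _ _ HS). pose proof (S_N2 _ _ _ _ HS). pose proof (S_n01 _ _ _ _ HS).
  pose proof (S_d _ _ _ _ HS) as Hd. unfold I1 in Hd.
  destruct (glue T (S_cet _ _ _ _ HS) F1 F2 F3 (S_cyc _ _ _ _ HS)) as [G1 G2].
  pose proof (at_n0 T N n0 d HS) as HN0.
  induction j as [|j IH]; intros Hj HjN. lia.
  destruct j.
  - exists (c1 T). intros x Hx. split.
    + simpl. apply Tmap_I1; auto. unfold I1; lra.
    + replace (n0 + 1)%nat with (S n0) by lia. rewrite iterT_S, HN0 by (unfold I1; lra).
      pose proof (iterT_range T n0 x ltac:(lia)) as Rg. rewrite HN0 in Rg by (unfold I1; lra).
      rewrite Tmap_I3 by (first [lra | exact F3 | unfold I3; lra]).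
      apply frac_eq. destruct G1 as [z Hz]. exists z. lra.
  - destruct IH as [c Hc]; try lia.
    set (j' := S j) in *.
    assert (DA : forall x, 0 < x < d -> forall k, (k <= N)%nat -> DomN T k x).
    { intros x Hx k Hk. apply (dom_all T N n0 d); auto. unfold I1; lra. intros _; lra. }
    assert (Hp : Dom T (frac_part c) /\ ~ I1 T (frac_part c)).
    { pose proof (frac_range c) as Rp.
      destruct (Req_dec (frac_part c) 0) as [E0|N0].
      { exfalso. apply (nomeet T N n0 d (n0 + j') (d/2) HS); try lia. unfold I1; lra. apply DA; [lra|lia].
        rewrite (proj2 (Hc (d/2) ltac:(lra))). unfold I1.
        rewrite (frac_eq (c + d - d/2) (d/2)). rewrite frac_id; lra.
        apply frac_zero_int in E0. destruct E0 as [z Hz]. exists z. lra. }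
      destruct (Rle_dec (frac_part c) (a1 T)) as [L1|L1].
      { exfalso. set (x := Rmin (frac_part c) d / 2). pose proof (Rmin_both (frac_part c) d).
        assert (0 < Rmin (frac_part c) d) by (apply Rmin_glb_lt; lra).
        apply (nomeet T N n0 d j' x HS); try lia. unfold I1, x; lra. apply DA; [unfold x; lra|lia].
        rewrite (proj1 (Hc x ltac:(unfold x; lra))). rewrite frac_shift, frac_id; unfold I1, x; lra. }
      destruct (Req_dec (frac_part c) (a2 T)) as [E2|N2].
      { exfalso.
        assert (E : iterT T (n0 + j') (d/2) = iterT T n0 (d/2)).
        { rewrite (proj2 (Hc (d/2) ltac:(lra))), HN0 by (unfold I1; lra).
          pose proof (iterT_range T n0 (d/2) ltac:(lia)) as Rg. rewrite HN0 in Rg by (unfold I1; lra).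
          rewrite <- frac_id by lra. apply frac_eq.
          destruct (frac_eqm c) as [z Hz]. exists (- z)%Z. rewrite opp_IZR. lra. }
        destruct (collide T N n0 d (n0 + j') n0 (d/2) (d/2) HS); try lia; auto;
          try (unfold I1; lra); apply DA; lra || lia. }
      split. destruct (Rlt_dec (frac_part c) (a2 T)); [right; left|right; right]; unfold I2, I3; lra.
      unfold I1; lra. }
    destruct (same_piece T (c + d) 0 (2 * d) W ltac:(lra)) as [c' Hc'].
    { intros t Ht. destruct (Rlt_le_dec t d) as [Lt|Ge].
      - rewrite <- (proj2 (Hc t ltac:(lra))). split.
        + assert (HD : DomN T (S (n0 + j')) t) by (apply DA; lra || lia).
          apply DomN_S in HD; tauto.
        + apply (nomeet T N n0 d); auto; try lia. unfold I1; lra. apply DA; lra || lia.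
      - destruct (Req_dec t d) as [->|Ne].
        + replace (c + d - d) with c by ring. exact Hp.
        + replace (c + d - t) with (c - (t - d)) by ring.
          rewrite <- (proj1 (Hc (t - d) ltac:(lra))). split.
          * assert (HD : DomN T (S j') (t - d)) by (apply DA; lra || lia).
            apply DomN_S in HD; tauto.
          * apply (nomeet T N n0 d); auto; try lia. unfold I1; lra. apply DA; lra || lia. }
    exists (c' - d). intros x Hx. split.
    + rewrite iterT_S, (proj1 (Hc x Hx)).
      replace (c - x) with (c + d - (x + d)) by ring. rewrite Hc' by lra. f_equal; ring.
    + replace (n0 + S j')%nat with (S (n0 + j')) by lia.
      rewrite iterT_S, (proj2 (Hc x Hx)), Hc' by lra. f_equal; ring.
Qed.

Lemma right_adj T N n0 d : Setting T N n0 d -> forall j, (1 <= j)%nat -> (j <= N - n0)%nat ->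
  exists c, forall x, d < x < a1 T -> iterT T j x = frac_part (c + a1 T - x) /\
                                   iterT T (n0 + j) x = frac_part (c + d - x).
Proof.
  intros HS. pose proof (S_wf _ _ _ _ HS) as W. pose proof W as (Wa&Wb&F1&F2&F3).
  pose proof (S_n0N _ _ _ _ HS). pose proof (S_N2 _ _ _ _ HS). pose proof (S_n01 _ _ _ _ HS).
  pose proof (S_d _ _ _ _ HS) as Hd. unfold I1 in Hd.
  destruct (glue T (S_cet _ _ _ _ HS) F1 F2 F3 (S_cyc _ _ _ _ HS)) as [G1 G2].
  pose proof (at_n0 T N n0 d HS) as HN0.
  assert (DA : forall x, d < x < a1 T -> forall k, (k <= N)%nat -> DomN T k x).
  { intros x Hx k Hk. apply (dom_all T N n0 d); [exact HS|exact Hk|unfold I1; lra|intros _; lra]. }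
  induction j as [|j IH]; intros Hj HjN. lia.
  destruct j.
  - exists (c1 T - a1 T). intros x Hx. split.
    + simpl. rewrite Tmap_I1; auto. f_equal; ring. unfold I1; lra.
    + replace (n0 + 1)%nat with (S n0) by lia. rewrite iterT_S.
      assert (I2 T (iterT T n0 x)).
      { assert (HD : DomN T (S n0) x) by (apply DA; [lra|lia]).
        apply DomN_S in HD as [HD1 HD2].
        assert (~ I1 T (iterT T n0 x)) by (apply (nomeet T N n0 d); [exact HS|lia|lia|unfold I1; lra|auto]).
        rewrite HN0 in * by (unfold I1; lra).
        destruct HD2 as [X|[X|X]]; [contradiction|auto|unfold I3 in X; lra]. }
      rewrite HN0 in * by (unfold I1; lra).
      rewrite Tmap_I2 by auto.
      apply frac_eq. destruct G2 as [z Hz]. exists z. lra.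
  - destruct IH as [c Hc]; try lia.
    set (j' := S j) in *.
    assert (Hp : Dom T (frac_part c) /\ ~ I1 T (frac_part c)).
    { pose proof (frac_range c) as Rp.
      set (xm := (d + a1 T) / 2).
      destruct (Req_dec (frac_part c) 0) as [E0|N0].
      { exfalso. apply (nomeet T N n0 d j' xm HS); try lia. unfold I1, xm; lra. apply DA; [unfold xm; lra|lia].
        rewrite (proj1 (Hc xm ltac:(unfold xm; lra))). unfold I1.
        rewrite (frac_eq (c + a1 T - xm) (a1 T - xm)). rewrite frac_id; unfold xm; lra.
        apply frac_zero_int in E0. destruct E0 as [z Hz]. exists z. lra. }
      destruct (Rle_dec (frac_part c) (a1 T)) as [L1|L1].
      { exfalso. set (x := d + Rmin (frac_part c) (a1 T - d) / 2). pose proof (Rmin_both (frac_part c) (a1 T - d)).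
        assert (0 < Rmin (frac_part c) (a1 T - d)) by (apply Rmin_glb_lt; lra).
        apply (nomeet T N n0 d (n0 + j') x HS); try lia. unfold I1, x; lra. apply DA; [unfold x; lra|lia].
        rewrite (proj2 (Hc x ltac:(unfold x; lra))).
        rewrite (frac_eq (c + d - x) (frac_part c + d - x)). rewrite frac_id; unfold I1, x; lra.
        destruct (frac_eqm c) as [z Hz]. exists (- z)%Z. rewrite opp_IZR. lra. }
      destruct (Req_dec (frac_part c) (a2 T)) as [E2|N2].
      { exfalso.
        assert (E : iterT T (n0 + j') xm = iterT T n0 xm).
        { rewrite (proj2 (Hc xm ltac:(unfold xm; lra))), HN0 by (unfold I1, xm; lra).
          pose proof (iterT_range T n0 xm ltac:(lia)) as Rg. rewrite HN0 in Rg by (unfold I1, xm; lra).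
          rewrite <- frac_id by lra. apply frac_eq.
          destruct (frac_eqm c) as [z Hz]. exists (- z)%Z. rewrite opp_IZR. lra. }
        destruct (collide T N n0 d (n0 + j') n0 xm xm HS); try lia; auto;
          try (unfold I1, xm; lra); apply DA; (unfold xm; lra) || lia. }
      split. destruct (Rlt_dec (frac_part c) (a2 T)); [right; left|right; right]; unfold I2, I3; lra.
      unfold I1; lra. }
    destruct (same_piece T (c + a1 T) d (2 * a1 T - d) W ltac:(lra)) as [c' Hc'].
    { intros t Ht. destruct (Rlt_le_dec t (a1 T)) as [Lt|Ge].
      - rewrite <- (proj1 (Hc t ltac:(lra))). split.
        + assert (HD : DomN T (S j') t) by (apply DA; lra || lia).
          apply DomN_S in HD; tauto.
        + apply (nomeet T N n0 d); [exact HS|lia|lia|unfold I1; lra|apply DA; lra || lia].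
      - destruct (Req_dec t (a1 T)) as [->|Ne].
        + replace (c + a1 T - a1 T) with c by ring. exact Hp.
        + replace (c + a1 T - t) with (c + d - (t - a1 T + d)) by ring.
          rewrite <- (proj2 (Hc (t - a1 T + d) ltac:(lra))). split.
          * assert (HD : DomN T (S (n0 + j')) (t - a1 T + d)) by (apply DA; lra || lia).
            apply DomN_S in HD; tauto.
          * apply (nomeet T N n0 d); [exact HS|lia|lia|unfold I1; lra|apply DA; lra || lia]. }
    exists (c' - a1 T). intros x Hx. split.
    + rewrite iterT_S, (proj1 (Hc x Hx)), Hc' by lra. f_equal; ring.
    + replace (n0 + S j')%nat with (S (n0 + j')) by lia.
      rewrite iterT_S, (proj2 (Hc x Hx)).
      replace (c + d - x) with (c + a1 T - (x + a1 T - d)) by ring.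
      rewrite Hc' by lra. f_equal; ring.
Qed.

Theorem lemma3p4 (T : CET3) (N n0 : nat) (d : R) :
  is_CET3 T ->
  fl1 T = true -> fl2 T = false -> fl3 T = false ->
  cyc_sets (img T 1 (I1 T)) (img T 1 (I3 T)) (img T 1 (I2 T)) ->
  ~ has_periodic_point T ->
  (2 <= N)%nat ->
  meets (img T N (I1 T)) (I1 T) ->
  (forall n, (1 <= n)%nat -> (n < N)%nat -> ~ meets (img T n (I1 T)) (I1 T)) ->
  (1 <= n0)%nat -> (n0 <= N - 1)%nat ->
  I1 T d -> DomN T n0 d -> iterT T n0 d = a2 T ->
  img T N (fun x => 0 < x < d) 0 \/ img T N (fun x => d < x < a1 T) (a1 T).
Proof.
  intros HT F1 F2 F3 Hcyc Hper HN Hmeet Hmin Hn1 Hn2 Hd HdD Hdv.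
  assert (HS : Setting T N n0 d) by (constructor; auto).
  pose proof (S_wf _ _ _ _ HS) as (Wa&Wb&_).
  unfold I1 in Hd.
  set (M := (N - n0)%nat).
  destruct (left_adj T N n0 d HS M ltac:(unfold M; lia) ltac:(unfold M; lia)) as [cl Hl].
  destruct (right_adj T N n0 d HS M ltac:(unfold M; lia) ltac:(unfold M; lia)) as [cr Hr].
  replace (n0 + M)%nat with N in Hl, Hr by (unfold M; lia).
  assert (DA : forall x, 0 < x < a1 T -> x <> d -> DomN T N x).
  { intros x Hx Hne. apply (dom_all T N n0 d); [exact HS|lia|unfold I1; lra|auto]. }
  assert (PER : forall x, 0 < x < a1 T -> x <> d -> iterT T N x = x -> False).
  { intros x Hx Hne E. apply Hper. exists x, N. repeat split; auto. lia. }
  assert (NM : forall x, 0 < x < a1 T -> x <> d -> ~ I1 T (iterT T M x)).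
  { intros x Hx Hne. apply (nomeet T N n0 d); [exact HS|unfold M; lia|unfold M; lia|unfold I1; lra|].
    apply (DomN_le T M N); [unfold M; lia|auto]. }
  destruct Hmeet as (y & (x0 & Hx0 & Hx0D & Hx0v) & Hy). unfold I1 in Hx0, Hy.
  assert (x0 <> d).
  { intros ->. assert (Dom T (iterT T n0 d)) by (apply Hx0D; lia). rewrite Hdv in H.
    destruct H as [X|[X|X]]; unfold I1, I2, I3 in X; lra. }
  pose proof (frac_range cl) as Rl. pose proof (frac_range cr) as Rr.
  assert (Shl : forall x, 0 < x < d -> iterT T N x = frac_part (frac_part cl + d - x) /\
                                     iterT T M x = frac_part (frac_part cl - x)).
  { intros x Hx. rewrite (proj1 (Hl x Hx)), (proj2 (Hl x Hx)). split; apply frac_eq;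
    destruct (frac_eqm cl) as [z Hz]; exists (- z)%Z; rewrite opp_IZR; lra. }
  assert (Shr : forall x, d < x < a1 T -> iterT T N x = frac_part (frac_part cr + d - x) /\
                                     iterT T M x = frac_part (frac_part cr + a1 T - x)).
  { intros x Hx. rewrite (proj1 (Hr x Hx)), (proj2 (Hr x Hx)). split; apply frac_eq;
    destruct (frac_eqm cr) as [z Hz]; exists (- z)%Z; rewrite opp_IZR; lra. }
  set (p := frac_part cl) in *. set (q := frac_part cr) in *.
  destruct (Rlt_le_dec x0 d) as [Lx|Gx].
  -
    destruct (Rlt_le_dec 1 (p + d)) as [B|B].
    + left. exists (p + d - 1). split; [split; lra|split; [apply DA; lra|]].
      rewrite (proj1 (Shl (p + d - 1) ltac:(lra))). apply frac_unique. lra. exists 1%Z. simpl. lra.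
    + rewrite (proj1 (Shl x0 ltac:(lra))), frac_id in Hx0v by lra.
      destruct (Req_dec p 0) as [P0|P0].
      * exfalso. apply (PER (d/2)). lra. lra.
        rewrite (proj1 (Shl (d/2) ltac:(lra))), frac_id; lra.
      * exfalso. set (x := Rmin p d / 2). pose proof (Rmin_both p d).
        assert (0 < Rmin p d) by (apply Rmin_glb_lt; lra).
        apply (NM x). unfold x; lra. unfold x; lra.
        rewrite (proj2 (Shl x ltac:(unfold x; lra))). unfold I1. rewrite frac_id; unfold x; lra.
  - assert (Gx' : d < x0) by lra.
    destruct (Req_dec q 0) as [Q0|Q0].
    { exfalso. apply (NM ((d + a1 T)/2)). lra. lra.
      rewrite (proj2 (Shr ((d + a1 T)/2) ltac:(lra))). unfold I1. rewrite frac_id; lra. }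
    destruct (Rlt_le_dec q (a1 T)) as [Q1|Q1].
    { exfalso. set (x := a1 T - Rmin (a1 T - d) (a1 T - q) / 2). pose proof (Rmin_both (a1 T - d) (a1 T - q)).
      assert (0 < Rmin (a1 T - d) (a1 T - q)) by (apply Rmin_glb_lt; lra).
      apply (NM x). unfold x; lra. unfold x; lra.
      rewrite (proj2 (Shr x ltac:(unfold x; lra))). unfold I1. rewrite frac_id; unfold x; lra. }
    destruct (Req_dec q (a1 T)) as [Q2|Q2].
    { exfalso. apply (PER ((d + a1 T)/2)). lra. lra.
      rewrite (proj1 (Shr ((d + a1 T)/2) ltac:(lra))), frac_id; lra. }
    destruct (Rlt_le_dec q (2 * a1 T - d)) as [Q3|Q3].
    + right. exists (q + d - a1 T). split; [split; lra|split; [apply DA; lra|]].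
      rewrite (proj1 (Shr (q + d - a1 T) ltac:(lra))). rewrite frac_id; lra.
    + exfalso. rewrite (proj1 (Shr x0 ltac:(lra))), frac_id in Hx0v by lra. lra.
Qed.
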